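(* Let $\alpha$ be a countable ordinal and $S$ a sierpinskisation of $\alpha$ and $\omega$. Then $[\omega]^{<\omega}$ is not embeddable (as a poset) in $I_{<\omega}(S)$.
   Context: A sierpinskisation of a countable order type $\alpha$ and $\omega$ is a poset $(S,\le)$ whose order is the intersection of two linear orders on $S$, one of type $\alpha$ and one of type $\omega$. $I_{<\omega}(S)$ is the set of finitely generated initial segments of $S$ ordered by inclusion. $[\omega]^{<\omega}$ is the set of finite subsets of $\mathbb{N}$ ordered by inclusion. *)

(* Defs.v *)
From Stdlib Require List.
From mathcomp Require Import all_boot.
From mathcomp Require Import finmap.
Set Implicit Arguments.
Unset Strict Implicit.
Unset Printing Implicit Defensive.
Open Scope fset_scope.

Definition linear_order (T : Type) (r : T -> T -> Prop) : Prop :=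
  (forall x, r x x) /\
  (forall x y z, r x y -> r y z -> r x z) /\
  (forall x y, r x y -> r y x -> x = y) /\
  (forall x y, r x y \/ r y x).

Definition well_order (T : Type) (r : T -> T -> Prop) : Prop :=
  linear_order r /\ well_founded (fun x y => r x y /\ x <> y).

Definition omega_type (T : Type) (r : T -> T -> Prop) : Prop :=
  exists h : T -> nat, bijective h /\ forall x y, r x y <-> (h x <= h y)%N.

(* (T, le) is a sierpinskisation of a countable ordinal and omega:
   le is the intersection of a well-order r1 (of some ordinal type alpha,
   necessarily countable since T is countable) and an order r2 of type omega. *)
Definition sierpinskisation (T : Type) (le : T -> T -> Prop) : Prop :=
  exists r1 r2 : T -> T -> Prop,
    well_order r1 /\ omega_type r2 /\ forall x y, le x y <-> (r1 x y /\ r2 x y).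

Definition fin_gen_initial_segment (T : Type) (le : T -> T -> Prop) (I : T -> Prop) : Prop :=
  exists F : list T, forall x, I x <-> exists y, List.In y F /\ le x y.

Definition embeds_fin_subsets_in_Ifin (T : Type) (le : T -> T -> Prop) : Prop :=
  exists f : {fset nat} -> (T -> Prop),
    (forall A, fin_gen_initial_segment le (f A)) /\
    (forall A B, A `<=` B <-> (forall x, f A x -> f B x)).

(* Main.v *)
Require Import Defs.
From mathcomp Require Import all_boot.
From mathcomp Require Import finmap.
From mathcomp Require Import zify.
From Stdlib Require Import Classical ClassicalEpsilon.
Open Scope nat_scope.

Lemma pigeon K (g : nat -> nat) : (forall j, g j < K) -> exists a b, a < b /\ g a = g b.
Proof.
elim: K g => [|K IH] g Hg; first by have := Hg 0.
destruct (classic (forall j, g j < K)) as [H|H]; first exact: IH.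
apply not_all_ex_not in H; destruct H as [j0 Hj0].
have Ej0 : g j0 = K by have := Hg j0; lia.
destruct (classic (exists k, j0 < k /\ g k = K)) as [[k [Hk1 Hk2]]|Hn].
  by exists j0, k; split => //; rewrite Ej0.
have Hg' : forall j, g (j0 + 1 + j) < K.
  move=> j; have := Hg (j0+1+j).
  have : g (j0+1+j) <> K by move=> E; apply Hn; exists (j0+1+j); split => //; lia.
  lia.
have [a [b [Hab Eab]]] := IH (fun j => g (j0 + 1 + j)) Hg'.
exists (j0+1+a); exists (j0+1+b); split => //; lia.
Qed.

Lemma wqo T (r1 r2 : T -> T -> Prop) (le : T -> T -> Prop) :
  well_order r1 -> omega_type r2 -> (forall x y, le x y <-> r1 x y /\ r2 x y) ->
  forall x : nat -> T, exists i j, i < j /\ le (x i) (x j).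
Proof.
move=> [[r1refl [r1tr [r1as r1tot]]] Hwf] [h [hbij hr2]] Hle x.
have hinj : injective h := bij_inj hbij.
have [n0 Hn0] : exists n0, forall n, r1 (x n0) (x n).
  apply NNPP => Hno.
  suff : forall t n, x n <> t by move=> /(_ (x 0) 0); apply.
  intro t; induction t as [t IHt] using (well_founded_ind Hwf).
  move=> n Ext.
  destruct (classic (forall k, r1 (x n) (x k))) as [Hall|Hnot].
    by apply Hno; exists n.
  apply not_all_ex_not in Hnot; destruct Hnot as [k Hk].
  have Hkn : r1 (x k) (x n) by case: (r1tot (x n) (x k)).
  apply: (IHt (x k) _ k erefl).
  split; first by rewrite -Ext.
  by move=> E; apply Hk; rewrite Ext E; apply r1refl.
destruct (classic (exists j, n0 < j /\ h (x n0) <= h (x j))) as [[j [Hj1 Hj2]]|Hn].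
  exists n0, j; split => //; apply/Hle; split => //; exact/hr2.
have Hb : forall j, h (x (n0+1+j)) < h (x n0).
  move=> j; case: (leqP (h (x n0)) (h (x (n0+1+j)))) => // H; exfalso.
  by apply Hn; exists (n0+1+j); split => //; lia.
have [a [b [Hab Eab]]] := @pigeon (h (x n0)) (fun j => h (x (n0+1+j))) Hb.
exists (n0+1+a); exists (n0+1+b); split; first lia.
rewrite (hinj _ _ Eab); apply/Hle; split; [apply r1refl | apply/hr2; exact: leqnn].
Qed.

Lemma list_bound T (P : nat -> T -> Prop) (L : list T) :
  (forall m m' y, m <= m' -> P m y -> P m' y) ->
  (forall y, List.In y L -> exists m, P m y) -> exists M, forall y, List.In y L -> P M y.
Proof.
move=> Hmon; elim: L => [|a L IH] H; first by exists 0.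
have [ma Ha] := H a (or_introl erefl).
have [M HM] := IH (fun y Hy => H y (or_intror Hy)).
exists (maxn ma M) => y [<-|Hy].
  by apply: Hmon Ha; apply: leq_maxl.
by apply: Hmon (HM y Hy); apply: leq_maxr.
Qed.

Definition Fs (n m : nat) : {fset nat} := seq_fset tt (iota n.+1 m).

Theorem lemma2p2 (T : Type) (le : T -> T -> Prop) :
  sierpinskisation le -> ~ embeds_fin_subsets_in_Ifin le.
Proof.
move=> [r1 [r2 [Hwo [Hom Hle]]]] [f [Hfg Hemb]].
have [[r1refl [r1tr _]] _] := Hwo.
have [h [_ hr2]] := Hom.
have letr : forall a b c, le a b -> le b c -> le a c.
  move=> a b c /Hle[H1 H2] /Hle[H3 H4]; apply/Hle; split; first exact: r1tr H1 H3.
  apply/hr2; have := proj1 (hr2 _ _) H2; have := proj1 (hr2 _ _) H4; lia.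
have lerefl : forall a, le a a.
  by move=> a; apply/Hle; split => //; apply/hr2.
have down : forall A a b, le a b -> f A b -> f A a.
  move=> A a b Hab Hb; have [L HL] := Hfg A.
  have [z [Hz Hbz]] := proj1 (HL b) Hb.
  by apply/HL; exists z; split => //; apply: letr Hbz.
have mon : forall n m m' y, m <= m' -> f (Fs n m) y -> f (Fs n m') y.
  move=> n m m' y Hmm' Hy; apply: (proj1 (Hemb _ _) _ y Hy); apply/fsubsetP => k.
  rewrite !seq_fsetE !mem_iota; lia.
have key : forall n, exists y, f [fset n] y /\ forall m, ~ f (Fs n m) y.
  move=> n; have [L HL] := Hfg [fset n].
  apply NNPP => Hno.
  have HL' : forall y, List.In y L -> exists m, f (Fs n m) y.
    move=> y Hy; apply NNPP => Hy'; apply Hno; exists y; split.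
      by apply/HL; exists y; split.
    by move=> m Hm; apply Hy'; exists m.
  have [M HM] := @list_bound T (fun m y => f (Fs n m) y) L (mon n) HL'.
  have : [fset n] `<=` Fs n M.
    apply/Hemb => a /HL [z [Hz Haz]]; exact: down Haz (HM z Hz).
  by rewrite fsub1set seq_fsetE mem_iota ltnn.
pose x n := proj1_sig (constructive_indefinite_description _ (key n)).
have Hx : forall n, f [fset n] (x n) /\ forall m, ~ f (Fs n m) (x n).
  by move=> n; rewrite /x; case: constructive_indefinite_description.
have [i [j [Hij Hle']]] := @wqo T r1 r2 le Hwo Hom Hle x.
have Hxi : f [fset j] (x i) by apply: down Hle' (proj1 (Hx j)).
apply: (proj2 (Hx i) (j - i)).
apply: (proj1 (Hemb _ _) _ _ Hxi); rewrite fsub1set seq_fsetE mem_iota; lia.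
Qed.
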